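(* Let $g_k$ denote the number of isomorphism classes of simple graphs on $k$ vertices. For every $n\ge 6$, there are at least $2g_{n-6}$ pairs of graphs $(G_1,G_2)$ of order $n$ which have the same Laplacian spectra but different Ihara zeta functions.
   Context: Graphs are finite and simple; the Laplacian is $L=D-A$. The Ihara zeta function of a graph with adjacency matrix $A$, degree matrix $D$, $n_G$ vertices and $m_G$ edges is $Z_G(t)=(1-t^2)^{n_G-m_G}\det(I-tA+t^2(D-I))^{-1}$ (equivalently the product $\prod_{[\gamma]}(1-t^{\ell(\gamma)})^{-1}$ over rotation classes of primitive closed geodesics). The null graph counts as the unique graph on $0$ vertices, so $g_0=1$. *)

(* Defs.v *)
From HB Require Import structures.
From mathcomp Require Import all_boot all_order all_algebra all_fingroup.
From mathcomp Require Import all_field.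
Set Implicit Arguments. Unset Strict Implicit. Unset Printing Implicit Defensive.
Import Order.TTheory GRing.Theory Num.Theory.
Local Open Scope ring_scope.

Definition graph (n : nat) := {ffun 'I_n * 'I_n -> bool}.

Definition adj n (G : graph n) (i j : 'I_n) : bool := G (i, j).

Definition simple_graph n (G : graph n) : bool :=
  [forall i, forall j, adj G i j == adj G j i] && [forall i, ~~ adj G i i].

Definition graph_iso n (G H : graph n) : bool :=
  [exists s : 'S_n, [forall i, forall j, adj H (s i) (s j) == adj G i j]].

Definition iso_class n (G : graph n) : {set graph n} :=
  [set H | simple_graph H && graph_iso G H].

Definition iso_classes n : {set {set graph n}} :=
  [set iso_class G | G in [set G : graph n | simple_graph G]].

Definition num_graphs (k : nat) : nat := #|iso_classes k|.

Definition deg n (G : graph n) (i : 'I_n) : nat := #|[set j | adj G i j]|.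
Definition num_edges n (G : graph n) : nat :=
  #|[set p : 'I_n * 'I_n | adj G p.1 p.2 && (p.1 < p.2)%N]|.

Definition adj_mx (R : pzRingType) n (G : graph n) : 'M[R]_n :=
  \matrix_(i, j) (adj G i j)%:R.
Definition deg_mx (R : pzRingType) n (G : graph n) : 'M[R]_n :=
  \matrix_(i, j) ((i == j)%:R * (deg G i)%:R).
Definition laplacian (R : pzRingType) n (G : graph n) : 'M[R]_n :=
  deg_mx R G - adj_mx R G.

(* Laplacian spectrum (eigenvalues with multiplicities) = the characteristic
   polynomial of L, taken over the algebraic complex numbers. *)
Definition lap_cospectral n (G1 G2 : graph n) : bool :=
  char_poly (laplacian algC G1) == char_poly (laplacian algC G2).

(* Ihara zeta function as a rational function in t, i.e. an element of the
   fraction field of Q[t]: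
   Z_G(t) = (1-t^2)^(n-m) * det(I - tA + t^2(D - I))^(-1). *)
Definition ihara_det n (G : graph n) : {poly rat} :=
  \det (\matrix_(i, j)
          ((i == j)%:R - 'X * (adj G i j)%:R
           + 'X ^+ 2 * ((i == j)%:R * (deg G i)%:R - (i == j)%:R)) : 'M[{poly rat}]_n).

Definition ihara_zeta n (G : graph n) : {fraction {poly rat}} :=
  (tofrac (1 - 'X ^+ 2 : {poly rat})) ^ ((n%:Z - (num_edges G)%:Z)%R)
  / tofrac (ihara_det G).

(* unordered pairs {[G1],[G2]} of isomorphism classes of simple graphs of
   order n with the same Laplacian spectrum and different Ihara zeta
   functions (both properties are isomorphism invariants) *)
Definition lap_cospec_zeta_pairs n : {set {set {set graph n}}} :=
  [set S : {set {set graph n}} |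
     [exists G1 : graph n, exists G2 : graph n,
        [&& simple_graph G1, simple_graph G2,
            S == [set iso_class G1; iso_class G2],
            lap_cospectral G1 G2 & ihara_zeta G1 != ihara_zeta G2]]].

(* Main.v *)
From HB Require Import structures.
Require Import Defs.
From mathcomp Require Import all_boot all_order all_algebra all_fingroup all_field.
From mathcomp Require Import zify.
Set Implicit Arguments. Unset Strict Implicit. Unset Printing Implicit Defensive.
Import Order.TTheory GRing.Theory Num.Theory.

Definition gsum k m (H : graph k) (X : graph m) : graph (k + m) :=
  [ffun p : 'I_(k+m) * 'I_(k+m) =>
     match split p.1, split p.2 with
     | inl a, inl b => H (a, b)
     | inr a, inr b => X (a, b)
     | _, _ => false end].

Lemma split_l m n (a : 'I_m) : split (lshift n a) = inl a.
Proof. exact: (unsplitK (inl a)). Qed.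
Lemma split_r m n (a : 'I_n) : split (rshift m a) = inr a.
Proof. exact: (unsplitK (inr a)). Qed.

Lemma adj_ll k m (H : graph k) (X : graph m) a b :
  adj (gsum H X) (lshift m a) (lshift m b) = adj H a b.
Proof. by rewrite /adj ffunE /= !split_l. Qed.
Lemma adj_rr k m (H : graph k) (X : graph m) a b :
  adj (gsum H X) (rshift k a) (rshift k b) = adj X a b.
Proof. by rewrite /adj ffunE /= !split_r. Qed.
Lemma adj_lr k m (H : graph k) (X : graph m) a b :
  adj (gsum H X) (lshift m a) (rshift k b) = false.
Proof. by rewrite /adj ffunE /= split_l split_r. Qed.
Lemma adj_rl k m (H : graph k) (X : graph m) a b :
  adj (gsum H X) (rshift k a) (lshift m b) = false.
Proof. by rewrite /adj ffunE /= split_l split_r. Qed.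

Lemma adj_cross k m (H : graph k) (X : graph m) (u v : 'I_(k+m)) :
  (u < k) != (v < k) -> adj (gsum H X) u v = false.
Proof.
rewrite /adj ffunE /=; case: splitP => a Ha; case: splitP => b Hb //=;
  rewrite Ha Hb; move: (ltn_ord a) => ?; rewrite ?ltn_ord ?ltnNge ?leq_addr //.
Qed.

Lemma adj_W k m (H H' : graph k) (X : graph m) (u v : 'I_(k+m)) :
  ~~ (u < k) -> ~~ (v < k) -> adj (gsum H X) u v = adj (gsum H' X) u v.
Proof.
rewrite /adj !ffunE /=; case: splitP => a Ha; case: splitP => b Hb //=;
  rewrite ?Ha ?Hb ?ltn_ord //.
Qed.

Lemma degE n (G : graph n) i : deg G i = \sum_j (adj G i j : nat).
Proof.
rewrite /deg -sum1_card big_mkcond /=; apply: eq_bigr => j _.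
by rewrite inE; case: adj.
Qed.

Lemma deg_l k m (H : graph k) (X : graph m) a : deg (gsum H X) (lshift m a) = deg H a.
Proof.
rewrite !degE big_split_ord /=; under eq_bigr do rewrite adj_ll.
by rewrite [X in _ + X]big1 ?addn0 // => j _; rewrite adj_lr.
Qed.
Lemma deg_r k m (H : graph k) (X : graph m) a : deg (gsum H X) (rshift k a) = deg X a.
Proof.
rewrite !degE big_split_ord /=; under [in RHS]eq_bigr do rewrite -(adj_rr H).
by rewrite [X in X + _]big1 ?add0n // => j _; rewrite adj_rl.
Qed.


Lemma card_pairs n (P : pred ('I_n * 'I_n)) :
  #|finset P| = \sum_i \sum_j (P (i, j) : nat).
Proof.
rewrite pair_big -sum1_card big_mkcond /=; apply: eq_bigr => -[i j] _.
by rewrite inE /=; case: P.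
Qed.

Lemma dsum_split k m (F : 'I_(k+m) -> 'I_(k+m) -> nat) :
  (forall a b, F (lshift m a) (rshift k b) = 0) ->
  (forall a b, F (rshift k a) (lshift m b) = 0) ->
  \sum_i \sum_j F i j =
  \sum_i \sum_j F (lshift m i) (lshift m j) + \sum_i \sum_j F (rshift k i) (rshift k j).
Proof.
move=> h1 h2; rewrite big_split_ord /=; congr (_ + _).
  by apply: eq_bigr => i _; rewrite big_split_ord /= [X in _ + X]big1 ?addn0.
by apply: eq_bigr => i _; rewrite big_split_ord /= [X in X + _]big1 ?add0n.
Qed.

Definition oedges n (G : graph n) := #|[set p : 'I_n * 'I_n | adj G p.1 p.2]|.
Definition e22 n (G : graph n) :=
  #|[set p : 'I_n * 'I_n | adj G p.1 p.2 && (deg G p.1 == 2) && (deg G p.2 == 2)]|.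

Lemma oedges_sum k m (H : graph k) (X : graph m) :
  oedges (gsum H X) = oedges H + oedges X.
Proof.
rewrite /oedges !card_pairs dsum_split => [||a b]; last by rewrite adj_rl.
  by congr (_ + _); apply: eq_bigr => i _; apply: eq_bigr => j _; rewrite ?adj_ll ?adj_rr.
by move=> a b; rewrite adj_lr.
Qed.

Lemma e22_sum k m (H : graph k) (X : graph m) :
  e22 (gsum H X) = e22 H + e22 X.
Proof.
rewrite /e22 !card_pairs dsum_split => [||a b]; last by rewrite adj_rl.
  congr (_ + _); apply: eq_bigr => i _; apply: eq_bigr => j _.
    by rewrite adj_ll !deg_l.
  by rewrite adj_rr !deg_r.
by move=> a b; rewrite adj_lr.
Qed.

Lemma num_edges_sum k m (H : graph k) (X : graph m) :
  num_edges (gsum H X) = num_edges H + num_edges X.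
Proof.
rewrite /num_edges !card_pairs.
rewrite dsum_split => [||a b]; last by rewrite adj_rl.
  congr (_ + _); apply: eq_bigr => i _; apply: eq_bigr => j _.
    by rewrite adj_ll.
  by rewrite adj_rr /= ltn_add2l.
by move=> a b; rewrite adj_lr.
Qed.

Lemma isoP n (G H : graph n) :
  reflect (exists s : 'S_n, forall i j, adj H (s i) (s j) = adj G i j) (graph_iso G H).
Proof.
apply: (iffP existsP) => -[s hs]; exists s.
  by move=> i j; apply/eqP; exact: (forallP (forallP hs i) j).
by apply/forallP => i; apply/forallP => j; rewrite hs.
Qed.

Lemma iso_refl n (G : graph n) : graph_iso G G.
Proof. by apply/isoP; exists 1%g => i j; rewrite !perm1. Qed.

Lemma iso_sym n (G H : graph n) : graph_iso G H -> graph_iso H G.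
Proof.
move/isoP=> [s hs]; apply/isoP; exists s^-1%g => i j.
by rewrite -hs !permKV.
Qed.

Lemma iso_trans n (G H K : graph n) : graph_iso G H -> graph_iso H K -> graph_iso G K.
Proof.
move/isoP=> [s hs] /isoP [t ht]; apply/isoP; exists (s * t)%g => i j.
by rewrite !permM ht hs.
Qed.

Lemma deg_iso n (G H : graph n) (s : 'S_n) :
  (forall i j, adj H (s i) (s j) = adj G i j) -> forall i, deg H (s i) = deg G i.
Proof.
move=> hs i; rewrite !degE (reindex_inj (@perm_inj _ s)) /=.
by apply: eq_bigr => j _; rewrite hs.
Qed.

Lemma oedges_iso n (G H : graph n) : graph_iso G H -> oedges G = oedges H.
Proof.
move/isoP=> [s hs]; rewrite /oedges !card_pairs.
rewrite [RHS](reindex_inj (@perm_inj _ s)) /=; apply: eq_bigr => i _.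
rewrite [RHS](reindex_inj (@perm_inj _ s)) /=; apply: eq_bigr => j _.
by rewrite hs.
Qed.

Lemma e22_iso n (G H : graph n) : graph_iso G H -> e22 G = e22 H.
Proof.
move/isoP=> [s hs]; rewrite /e22 !card_pairs.
rewrite [RHS](reindex_inj (@perm_inj _ s)) /=; apply: eq_bigr => i _.
rewrite [RHS](reindex_inj (@perm_inj _ s)) /=; apply: eq_bigr => j _.
by rewrite hs !(deg_iso hs).
Qed.

Lemma in_iso_class n (G H : graph n) : (H \in iso_class G) = simple_graph H && graph_iso G H.
Proof. by rewrite inE. Qed.

Lemma iso_class_eq n (G H : graph n) :
  graph_iso G H -> iso_class G = iso_class H.
Proof.
move=> gh; apply/setP => K; rewrite !inE; apply/andP/andP => -[sK hK]; split => //.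
  exact: iso_trans (iso_sym gh) hK.
exact: iso_trans gh hK.
Qed.

Lemma iso_class_iso n (G H : graph n) :
  simple_graph G -> iso_class G = iso_class H -> graph_iso H G.
Proof.
move=> sG e; have : G \in iso_class G by rewrite inE sG iso_refl.
by rewrite e inE => /andP [].
Qed.


Lemma cancel_iso k m (H H' : graph k) (X : graph m) :
  graph_iso (gsum H X) (gsum H' X) -> graph_iso H H'.
Proof.
move=> iso12; have [s hs] := isoP _ _ iso12.
have exP : forall a : 'I_k, exists r, (0 < r) && ((s ^+ r)%g (lshift m a) < k).
  by move=> a; exists #[s]%g; rewrite order_gt0 expg_order perm1 /= ltn_ord.
pose r a := ex_minn (exP a).
have rP : forall a, (0 < r a) && ((s ^+ r a)%g (lshift m a) < k).
  by move=> a; rewrite /r; case: ex_minnP.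
have rmin : forall a n, (0 < n) && ((s ^+ n)%g (lshift m a) < k) -> r a <= n.
  by move=> a; rewrite /r; case: ex_minnP.
have rpos : forall a, 0 < r a by move=> a; case/andP: (rP a).
have rP2 : forall a, (s ^+ r a)%g (lshift m a) < k by move=> a; case/andP: (rP a).
have notV : forall a l, 0 < l < r a -> ~~ ((s ^+ l)%g (lshift m a) < k).
  move=> a l /andP [l0 lr]; apply/negP => hl.
  by move: (rmin a l); rewrite l0 hl => /(_ isT); rewrite leqNgt lr.
pose psi a : 'I_k := Ordinal (rP2 a).
have psiE : forall a, lshift m (psi a) = (s ^+ r a)%g (lshift m a) by move=> a; apply: val_inj.
have iter : forall (u v : 'I_(k+m)) n,
    (forall l, 0 < l <= n -> ~~ ((s ^+ l)%g u < k) && ~~ ((s ^+ l)%g v < k)) ->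
    adj (gsum H' X) ((s ^+ n.+1)%g u) ((s ^+ n.+1)%g v) = adj (gsum H X) u v.
  move=> u v; elim=> [|n IH] hl; first by rewrite expg1 hs.
  rewrite expgSr !permM hs.
  have /andP [hu hv] := hl n.+1 (leqnn _).
  rewrite (adj_W H H') // IH // => l /andP [l0 ln]; apply: hl; rewrite l0 /=.
  exact: leqW.
have claim1 : forall a b, adj H a b -> adj H' (psi a) (psi b).
  move=> a b hab.
  have key : forall n, n.+1 <= minn (r a) (r b) ->
      adj (gsum H' X) ((s ^+ n.+1)%g (lshift m a)) ((s ^+ n.+1)%g (lshift m b)).
    move=> n hn; rewrite iter ?adj_ll // => l /andP [l0 ln].
    rewrite !notV // l0 /=; apply: leq_ltn_trans ln _.
      by move: hn; rewrite leq_min => /andP [_ ->].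
    by move: hn; rewrite leq_min => /andP [-> _].
  have ha := rpos a; have hb := rpos b.
  case: (ltngtP (r a) (r b)) => hr.
  - have := key (r a).-1; rewrite prednK // => /(_ ltac:(lia)).
    rewrite adj_cross // rP2 (negbTE (notV b (r a) _)) //.
    by rewrite ha hr.
  - have := key (r b).-1; rewrite prednK // => /(_ ltac:(lia)).
    rewrite adj_cross // rP2 (negbTE (notV a (r b) _)) //.
    by rewrite hb hr.
  - have := key (r a).-1; rewrite prednK // => /(_ ltac:(lia)).
    by rewrite {2}hr -!psiE adj_ll.
have psi_inj : injective psi.
  move=> a b /(congr1 (lshift m)); rewrite !psiE => e.
  case: (ltngtP (r a) (r b)) => hr.
  - move: e; rewrite -(subnK (ltnW hr)) expgD permM => /perm_inj e.
    move: (rmin b (r b - r a)); rewrite subn_gt0 hr -e /= ltn_ord => /(_ isT).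
    by rewrite leqNgt ltn_subrL rpos (leq_trans _ hr) // rpos.
  - move: e; rewrite -(subnK (ltnW hr)) expgD permM => /perm_inj e.
    move: (rmin a (r a - r b)); rewrite subn_gt0 hr e /= ltn_ord => /(_ isT).
    by rewrite leqNgt ltn_subrL rpos (leq_trans _ hr) // rpos.
  - by move: e; rewrite hr => /perm_inj /lshift_inj.
pose f (p : 'I_k * 'I_k) := (psi p.1, psi p.2).
have finj : injective f.
  move=> [a b] [c d] e.
  have e1 : psi a = psi c by exact: (congr1 fst e).
  have e2 : psi b = psi d by exact: (congr1 snd e).
  by rewrite (psi_inj _ _ e1) (psi_inj _ _ e2).
pose EH := [set p : 'I_k * 'I_k | adj H p.1 p.2].
pose EH' := [set p : 'I_k * 'I_k | adj H' p.1 p.2].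
have ecard : #|EH| = #|EH'|.
  have := oedges_iso iso12; rewrite !oedges_sum /oedges => /addIn.
  done.
have fEH : f @: EH = EH'.
  apply/eqP; rewrite eqEcard card_imset // ecard leqnn andbT.
  apply/subsetP => q /imsetP [[a b]]; rewrite inE /= => hab ->.
  by rewrite inE /= claim1.
have adjE : forall a b, adj H' (psi a) (psi b) = adj H a b.
  move=> a b; apply/idP/idP; last exact: claim1.
  move=> h; have : (psi a, psi b) \in EH' by rewrite inE.
  rewrite -fEH => /imsetP [[c d]]; rewrite inE /= => hcd e.
  by move: (finj (a, b) (c, d) e) => [-> ->].
apply/isoP; exists (perm psi_inj) => i j; rewrite !permE; exact: adjE.
Qed.


Open Scope ring_scope.

Lemma gsum_mx (R : pzRingType) k m (H : graph k) (X : graph m)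
    (F : bool -> nat -> bool -> R) :
  (forall d, F false d false = 0) ->
  \matrix_(i, j) F (i == j) (deg (gsum H X) i) (adj (gsum H X) i j) =
  block_mx (\matrix_(i, j) F (i == j) (deg H i) (adj H i j)) 0 0
           (\matrix_(i, j) F (i == j) (deg X i) (adj X i j)).
Proof.
move=> F0; apply/matrixP => i j.
rewrite -[i]splitK -[j]splitK.
case: (split i) => a; case: (split j) => b /=.
- by rewrite block_mxEul !mxE eq_lshift deg_l adj_ll.
- by rewrite block_mxEur !mxE (eq_shift.1.2) adj_lr F0.
- by rewrite block_mxEdl !mxE (eq_shift.2) adj_rl F0.
- by rewrite block_mxEdr !mxE eq_rshift deg_r adj_rr.
Qed.

Lemma lapE (R : pzRingType) n (G : graph n) :
  laplacian R G = \matrix_(i, j) ((i == j)%:R * (deg G i)%:R - (adj G i j)%:R).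
Proof. by apply/matrixP => i j; rewrite !mxE. Qed.

Lemma lap_sum (R : pzRingType) k m (H : graph k) (X : graph m) :
  laplacian R (gsum H X) = block_mx (laplacian R H) 0 0 (laplacian R X).
Proof.
rewrite !lapE.
have := @gsum_mx R k m H X (fun b d e => b%:R * d%:R - e%:R).
by move=> ->// d /=; rewrite mul0r subr0.
Qed.

Lemma char_poly_block (R : comNzRingType) k m (A : 'M[R]_k) (D : 'M[R]_m) :
  char_poly (block_mx A 0 0 D) = char_poly A * char_poly D.
Proof.
rewrite /char_poly /char_poly_mx map_block_mx !map_mx0 scalar_mx_block.
rewrite opp_block_mx add_block_mx !oppr0 !addr0.
exact: det_ublock.
Qed.

Lemma lap_char_sum k m (H : graph k) (X : graph m) :
  char_poly (laplacian algC (gsum H X)) =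
  char_poly (laplacian algC H) * char_poly (laplacian algC X).
Proof. by rewrite lap_sum char_poly_block. Qed.

Lemma ihara_det_sum k m (H : graph k) (X : graph m) :
  ihara_det (gsum H X) = ihara_det H * ihara_det X.
Proof.
rewrite /ihara_det.
have := @gsum_mx {poly rat} k m H X
  (fun b d e => b%:R - 'X * e%:R + 'X ^+ 2 * (b%:R * d%:R - b%:R)).
move=> ->; first by rewrite det_ublock.
by move=> d /=; rewrite !(mulr0n, mulr0, mul0r, subr0, add0r, addr0, oppr0).
Qed.

Lemma ihara_det_neq0 n (G : graph n) : ihara_det G != 0.
Proof.
apply/negP => /eqP h.
have : (ihara_det G).[0] = 1.
  rewrite /ihara_det -horner_evalE -det_map_mx.
  rewrite [X in \det X](_ : _ = 1%:M) ?det1 //.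
  apply/matrixP => i j; rewrite !mxE /= horner_evalE.
  by rewrite !hornerE /= hornerMn hornerE.
by rewrite h horner0 => /eqP; rewrite eq_sym oner_eq0.
Qed.

Close Scope ring_scope.

Open Scope ring_scope.

Lemma coef_prod3 (R : comNzRingType) (I : Type) (r : seq I) (F : I -> {poly R}) :
  (forall i, (size (F i) <= 3)%N) ->
  (size (\prod_(i <- r) F i)%R <= (size r).*2.+1)%N /\
  (\prod_(i <- r) F i)`_((size r).*2) = \prod_(i <- r) (F i)`_2.
Proof.
move=> hF; elim: r => [|a r [IHs IHc]] /=.
  by rewrite !big_nil size_poly1 coef1.
rewrite !big_cons; split.
  apply: leq_trans (size_mul_leq _ _) _; have := hF a; move: IHs.
  move: (size (\prod_(j <- r) F j)%R) (size (F a)) => x y; lia.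
rewrite coefM -(big_mkord xpredT (fun j => (F a)`_j * _`_(_ - j))).
rewrite doubleS big_ltn // big_ltn // big_ltn // big_nat_cond.
rewrite [X in _ + (_ + (_ + X))]big1 ?addr0.
  rewrite [(\prod_(j <- r) F j)`__]nth_default ?mul0r ?add0r; last first.
    by apply: leq_trans IHs _; rewrite subn0 ltnW.
  rewrite [(\prod_(j <- r) F j)`__]nth_default ?mul0r ?add0r; last first.
    by apply: leq_trans IHs _; rewrite subn1 /= leqnn.
  by rewrite !mulr0 !add0r subSS subSS subn0 IHc.
move=> j /andP [/andP [hj _] _]; rewrite [(F a)`_j]nth_default ?mul0r //.
by apply: leq_trans (hF a) hj.
Qed.

Close Scope ring_scope.

Open Scope ring_scope.

Lemma size_index_enum_ord n : size (index_enum 'I_n) = n.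
Proof. by rewrite -(filter_predT (index_enum _)) deprecated_filter_index_enum -cardE card_ord. Qed.

Lemma coef_det3 (R : comNzRingType) n (M : 'M[{poly R}]_n) :
  (forall i j, (size (M i j) <= 3)%N) ->
  (\det M)`_(n.*2) = \det (\matrix_(i, j) (M i j)`_2).
Proof.
move=> hM; rewrite /determinant coef_sum; apply: eq_bigr => s _.
have [_ hc] := @coef_prod3 _ _ (index_enum 'I_n) (fun i => M i (s i)) (fun i => hM _ _).
rewrite size_index_enum_ord in hc.
rewrite !mulr_sign; case: (odd_perm s); rewrite ?coefN hc; [congr (- _)|];
  by apply: eq_bigr => i _; rewrite mxE.
Qed.

Close Scope ring_scope.

Open Scope ring_scope.

Lemma ent_coef (b : bool) (d : nat) (e : bool) (l : nat) :
  ((b%:R - 'X * e%:R + 'X ^+ 2 * (b%:R * d%:R - b%:R) : {poly rat})`_l) =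
  if l == 0%N then b%:R else if l == 1%N then - e%:R
  else if l == 2%N then b%:R * d%:R - b%:R else 0.
Proof.
rewrite coefD coefB coefXM coefXnM -!polyC_natr -polyCM -polyCB !coefC.
by case: l => [|[|[|l]]] /=; rewrite ?subr0 ?sub0r ?addr0 ?add0r.
Qed.

Lemma ihara_top n (G : graph n) :
  (ihara_det G)`_(n.*2) = \prod_i ((deg G i)%:R - 1 : rat).
Proof.
rewrite /ihara_det coef_det3 => [|i j]; last first.
  by apply/leq_sizeP => l hl; rewrite mxE ent_coef; case: l hl => [|[|[|l]]].
rewrite [X in \det X](_ : _ = diag_mx (\row_i ((deg G i)%:R - 1 : rat))).
  by rewrite det_diag; apply: eq_bigr => i _; rewrite mxE.
apply/matrixP => i j; rewrite !mxE ent_coef /=.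
by case: eqP => [->|]; rewrite ?eqxx /= ?mul1r ?mul0r ?subr0 ?mulr1n ?mulr0n.
Qed.

Close Scope ring_scope.

Definition el (l : seq (nat * nat)) (a b : nat) := ((a, b) \in l) || ((b, a) \in l).
Definition gad (l : seq (nat * nat)) : graph 6 :=
  [ffun p : 'I_6 * 'I_6 => el l p.1 p.2].
Definition degl l a := count (el l a) (iota 0 6).

Lemma adj_gad l (i j : 'I_6) : adj (gad l) i j = el l i j.
Proof. by rewrite /adj ffunE. Qed.

Lemma sum_ord6 (F : nat -> nat) : \sum_(i < 6) F i = sumn (map F (iota 0 6)).
Proof. by rewrite !big_ord_recl big_ord0 /= !addnA. Qed.

Lemma deg_gad l (i : 'I_6) : deg (gad l) i = degl l i.
Proof.
rewrite degE (eq_bigr (fun j : 'I_6 => (el l i j : nat))) => [|j _]; last by rewrite adj_gad.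
by rewrite (sum_ord6 (fun j => el l i j)) /degl /= !addnA addn0.
Qed.

Definition X0 := [:: (0,2); (0,3); (0,4); (0,5); (1,4); (1,5); (2,3)]%N.
Definition Y0 := [:: (0,2); (0,4); (0,5); (1,2); (1,4); (1,5); (2,3)]%N.
Definition X1 := [:: (0,1); (0,2); (0,3); (0,5); (1,5); (2,3); (2,4); (3,4)]%N.
Definition Y1 := [:: (0,3); (0,4); (0,5); (1,2); (1,3); (1,4); (2,3); (2,4)]%N.

Definition num_edgesl l := sumn (map (fun a => sumn (map (fun b => (el l a b && (a < b) : nat)) (iota 0 6))) (iota 0 6)).
Lemma num_edges_gad l : num_edges (gad l) = num_edgesl l.
Proof.
rewrite /num_edges card_pairs.
rewrite (eq_bigr (fun i : 'I_6 => sumn (map (fun b => (el l i b && (i < b) : nat)) (iota 0 6)))) => [|i _].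
  by rewrite (sum_ord6 (fun a => sumn (map (fun b => (el l a b && (a < b) : nat)) (iota 0 6)))).
rewrite (eq_bigr (fun j : 'I_6 => (el l i j && (i < j) : nat))) => [|j _]; last by rewrite adj_gad.
by rewrite (sum_ord6 (fun j => (el l i j && (i < j) : nat))).
Qed.

Definition e22l l := sumn (map (fun a => sumn (map (fun b =>
  (el l a b && (degl l a == 2) && (degl l b == 2) : nat)) (iota 0 6))) (iota 0 6)).
Lemma e22_gad l : e22 (gad l) = e22l l.
Proof.
rewrite /e22 card_pairs.
rewrite (eq_bigr (fun i : 'I_6 => sumn (map (fun b => (el l i b && (degl l i == 2) && (degl l b == 2) : nat)) (iota 0 6)))) => [|i _].
  by rewrite (sum_ord6 (fun a => sumn (map (fun b => (el l a b && (degl l a == 2) && (degl l b == 2) : nat)) (iota 0 6)))).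
rewrite (eq_bigr (fun j : 'I_6 => (el l i j && (degl l i == 2) && (degl l j == 2) : nat))) => [|j _].
  by rewrite (sum_ord6 (fun j => (el l i j && (degl l i == 2) && (degl l j == 2) : nat))).
by rewrite adj_gad !deg_gad.
Qed.

Lemma simple_gad l : all (fun a => ~~ el l a a) (iota 0 6) -> simple_graph (gad l).
Proof.
move=> h; apply/andP; split; apply/forallP => i.
  by apply/forallP => j; rewrite !adj_gad /el orbC.
rewrite adj_gad; move/allP: h; apply; rewrite mem_iota /=; exact: ltn_ord.
Qed.

Lemma facts :
  [/\ num_edgesl X0 = 7, num_edgesl Y0 = 7, num_edgesl X1 = 8 & num_edgesl Y1 = 8]%N
  /\ [/\ e22l X0 = 6, e22l Y0 = 0, e22l X1 = 2 & e22l Y1 = 0]%N.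
Proof. by vm_compute. Qed.


Open Scope ring_scope.

Lemma cospec_int n (A B P Q : 'M[int]_n) (c : int) :
  c != 0 -> P *m A = B *m P -> Q *m P = c%:M -> char_poly A = char_poly B.
Proof.
move=> c0 hPA hQP.
have dP : \det P != 0.
  apply/eqP => h; have := congr1 determinant hQP.
  rewrite det_mulmx h mulr0 det_scalar => /esym /eqP; rewrite expf_eq0 (negbTE c0).
  by rewrite andbF.
pose mP := map_mx (@polyC int) P.
have key : char_poly_mx B *m mP = mP *m char_poly_mx A.
  rewrite /char_poly_mx mulmxBl mulmxBr -map_mxM -hPA map_mxM.
  by rewrite mul_scalar_mx mul_mx_scalar.
have := congr1 determinant key; rewrite !det_mulmx.
have dmP : \det mP != 0 by rewrite det_map_mx polyC_eq0.
by move=> e; apply: (mulIf dmP); rewrite /char_poly e mulrC.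
Qed.

Lemma lap_intr n (G : graph n) :
  laplacian algC G = map_mx (intr : int -> algC) (laplacian int G).
Proof.
apply/matrixP => i j; rewrite !mxE.
by rewrite rmorphB rmorphM /= !rmorph_nat.
Qed.

Lemma cospec_transfer n (G1 G2 : graph n) :
  char_poly (laplacian int G1) = char_poly (laplacian int G2) ->
  char_poly (laplacian algC G1) = char_poly (laplacian algC G2).
Proof.
by move=> h; rewrite !lap_intr -!map_char_poly h.
Qed.

Close Scope ring_scope.

Open Scope ring_scope.

Definition mxl (s : seq (seq int)) : 'M[int]_6 := \matrix_(i, j) nth 0 (nth [::] s i) j.
Definition lapl l (a b : nat) : int := (a == b)%:R * (degl l a)%:R - (el l a b)%:R.
Definition lapm l : 'M[int]_6 := \matrix_(i, j) lapl l i j.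

Lemma lap_gad l : laplacian int (gad l) = lapm l.
Proof. by rewrite lapE; apply/matrixP => i j; rewrite !mxE deg_gad adj_gad. Qed.

Lemma sum6 (F : nat -> int) : \sum_(k < 6) F k = F 0%N + F 1%N + F 2%N + F 3%N + F 4%N + F 5%N.
Proof. by rewrite !big_ord_recl big_ord0 /= !addrA addr0. Qed.

Lemma all6 (P : nat -> nat -> bool) :
  all (fun a => all (P a) (iota 0 6)) (iota 0 6) -> forall i j : 'I_6, P i j.
Proof.
move=> /allP h i j.
have hi : (i : nat) \in iota 0 6 by rewrite mem_iota /= ltn_ord.
have hj : (j : nat) \in iota 0 6 by rewrite mem_iota /= ltn_ord.
exact: (allP (h _ hi) _ hj).
Qed.

Lemma mulmx_fun (f g : nat -> nat -> int) (i j : 'I_6) :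
  ((\matrix_(a, b) f a b : 'M[int]_6) *m (\matrix_(a, b) g a b)) i j =
  f i 0%N * g 0%N j + f i 1%N * g 1%N j + f i 2%N * g 2%N j + f i 3%N * g 3%N j
  + f i 4%N * g 4%N j + f i 5%N * g 5%N j.
Proof.
rewrite !mxE (eq_bigr (fun k : 'I_6 => f i k * g k j)) => [|k _]; last by rewrite !mxE.
exact: (sum6 (fun k => f i k * g k j)).
Qed.

Definition P0l : seq (seq int) :=
  [:: [:: 0; 1; -1; 0; -1; -1]; [:: 1; -1; -1; -1; 0; 0]; [:: -1; -1; -1; 1; 0; 0];
      [:: 0; -1; 1; 0; -1; -1]; [:: -1; 0; 0; -1; -1; 1]; [:: -1; 0; 0; -1; 1; -1]].
Definition P1l : seq (seq int) :=
  [:: [:: 1; 1; 0; 0; 1; -1]; [:: 1; 0; -1; 1; 0; 1]; [:: 1; 0; 1; -1; 0; 1];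
      [:: 0; 1; 1; 1; -1; 0]; [:: -1; 1; 0; 0; 1; 1]; [:: 0; -1; 1; 1; 1; 0]].
Definition Q1l : seq (seq int) :=
  [:: [:: 1; 1; 1; 0; -1; 0]; [:: 1; 0; 0; 1; 1; -1]; [:: 0; -1; 1; 1; 0; 1];
      [:: 0; 1; -1; 1; 0; 1]; [:: 1; 0; 0; -1; 1; 1]; [:: -1; 1; 1; 0; 1; 0]].

Definition mprod (f g : nat -> nat -> int) (a b : nat) : int :=
  f a 0%N * g 0%N b + f a 1%N * g 1%N b + f a 2%N * g 2%N b + f a 3%N * g 3%N b
  + f a 4%N * g 4%N b + f a 5%N * g 5%N b.
Definition fl (s : seq (seq int)) a b := nth 0 (nth [::] s a) b.

Lemma mx_eq (f g f' g' : nat -> nat -> int) :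
  all (fun a => all (fun b => mprod f g a b == mprod f' g' a b) (iota 0 6)) (iota 0 6) ->
  (\matrix_(a, b) f a b : 'M[int]_6) *m (\matrix_(a, b) g a b : 'M[int]_6) =
  (\matrix_(a, b) f' a b : 'M[int]_6) *m (\matrix_(a, b) g' a b : 'M[int]_6).
Proof.
move=> h; apply/matrixP => i j; rewrite !mulmx_fun.
exact: (eqP (all6 h i j)).
Qed.

Lemma mx_scal (f g : nat -> nat -> int) (c : int) :
  all (fun a => all (fun b => mprod f g a b == (a == b)%:R * c) (iota 0 6)) (iota 0 6) ->
  (\matrix_(a, b) f a b : 'M[int]_6) *m (\matrix_(a, b) g a b : 'M[int]_6) = c%:M.
Proof.
move=> h; apply/matrixP => i j; rewrite mulmx_fun mxE.
by have := eqP (all6 h i j); rewrite /mprod => ->; rewrite mulr_natl.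
Qed.

Lemma cospec0 : char_poly (laplacian int (gad X0)) = char_poly (laplacian int (gad Y0)).
Proof.
rewrite !lap_gad; apply: (@cospec_int 6 _ _ (mxl P0l) (mxl P0l) 4) => //.
  by apply: (@mx_eq (fl P0l) (lapl X0) (lapl Y0) (fl P0l)); vm_compute.
by apply: (@mx_scal (fl P0l) (fl P0l)); vm_compute.
Qed.

Lemma cospec1 : char_poly (laplacian int (gad X1)) = char_poly (laplacian int (gad Y1)).
Proof.
rewrite !lap_gad; apply: (@cospec_int 6 _ _ (mxl P1l) (mxl Q1l) 4) => //.
  by apply: (@mx_eq (fl P1l) (lapl X1) (lapl Y1) (fl P1l)); vm_compute.
by apply: (@mx_scal (fl Q1l) (fl P1l)); vm_compute.
Qed.

Close Scope ring_scope.

Open Scope ring_scope.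

Lemma all1 (P : nat -> bool) : all P (iota 0 6) -> forall i : 'I_6, P i.
Proof. by move=> /allP h i; apply: h; rewrite mem_iota /= ltn_ord. Qed.

Lemma top_neq0 l : all (fun a => degl l a != 1%N) (iota 0 6) ->
  (ihara_det (gad l))`_12 != 0.
Proof.
move=> h; rewrite (ihara_top (gad l)); apply/prodf_neq0 => i _.
by rewrite deg_gad subr_eq0 pnatr_eq1; exact: (all1 h i).
Qed.

Lemma top_eq0 l (v : 'I_6) : degl l v = 1%N -> (ihara_det (gad l))`_12 = 0.
Proof.
move=> h; rewrite (ihara_top (gad l)); apply/eqP/prodf_eq0; exists v => //.
by rewrite deg_gad h subrr.
Qed.

Lemma idet_neq l1 l2 (v : 'I_6) : all (fun a => degl l1 a != 1%N) (iota 0 6) ->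
  degl l2 v = 1%N -> ihara_det (gad l1) != ihara_det (gad l2).
Proof.
move=> h1 h2; apply/eqP => e; move: (top_neq0 h1); rewrite e (top_eq0 h2).
by rewrite eqxx.
Qed.

Lemma one_subX2_neq0 : (1 - 'X ^+ 2 : {poly rat}) != 0.
Proof.
apply/eqP => h; have := congr1 (fun p : {poly rat} => p`_2) h.
rewrite coefB coef1 coefXn /= coef0 sub0r => /eqP; rewrite oppr_eq0 oner_eq0.
done.
Qed.

Lemma zeta_neq k (H : graph k) l1 l2 :
  num_edgesl l1 = num_edgesl l2 -> ihara_det (gad l1) != ihara_det (gad l2) ->
  ihara_zeta (gsum H (gad l1)) != ihara_zeta (gsum H (gad l2)).
Proof.
move=> he hd; rewrite /ihara_zeta !num_edges_sum !num_edges_gad he.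
set A := (_ ^ _); apply/negP => /eqP h.
have A0 : A != 0 by rewrite /A expfz_neq0 // tofrac_eq0 one_subX2_neq0.
have := mulfI A0 h => /(congr1 (fun x => x^-1)); rewrite !invrK => /eqP.
rewrite tofrac_eq !ihara_det_sum => /eqP /(mulfI (ihara_det_neq0 H)) e.
by rewrite e eqxx in hd.
Qed.

Close Scope ring_scope.

Lemma simple_gsum k m (H : graph k) (X : graph m) :
  simple_graph H -> simple_graph X -> simple_graph (gsum H X).
Proof.
move=> /andP [/forallP sH /forallP iH] /andP [/forallP sX /forallP iX].
apply/andP; split; apply/forallP => i; rewrite -[i]splitK.
  apply/forallP => j; rewrite -[j]splitK.
  case: (split i) => a; case: (split j) => b /=;
    rewrite ?adj_ll ?adj_rr ?adj_lr ?adj_rl //.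
    exact: (forallP (sH a) b).
  exact: (forallP (sX a) b).
by case: (split i) => a /=; rewrite ?adj_ll ?adj_rr.
Qed.

Definition gX (b : bool) := if b then gad X1 else gad X0.
Definition gY (b : bool) := if b then gad Y1 else gad Y0.

Lemma gX_simple b : simple_graph (gX b).
Proof. by case: b; apply: simple_gad; vm_compute. Qed.
Lemma gY_simple b : simple_graph (gY b).
Proof. by case: b; apply: simple_gad; vm_compute. Qed.

Lemma e22X b : e22 (gX b) = if b then 2%N else 6%N.
Proof. by case: b; rewrite /= e22_gad; have [_ [? ? ? ?]] := facts. Qed.
Lemma e22Y b : e22 (gY b) = 0%N.
Proof. by case: b; rewrite /= e22_gad; have [_ [? ? ? ?]] := facts. Qed.

Lemma pair_good k (H : graph k) b :
  simple_graph H ->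
  lap_cospectral (gsum H (gX b)) (gsum H (gY b)) &&
  (ihara_zeta (gsum H (gX b)) != ihara_zeta (gsum H (gY b))).
Proof.
move=> sH; have [[e0 e0' e1 e1'] _] := facts.
apply/andP; split.
  rewrite /lap_cospectral !lap_char_sum; apply/eqP; congr (_ * _)%R.
  by apply: cospec_transfer; case: b; [exact: cospec1 | exact: cospec0].
case: b => /=; apply: zeta_neq.
- by rewrite e1 e1'.
- by apply: (@idet_neq _ _ (@Ordinal 6 5 isT)) => //; vm_compute.
- by rewrite e0 e0'.
- by apply: (@idet_neq _ _ (@Ordinal 6 3 isT)) => //; vm_compute.
Qed.

Definition rep k (c : {set graph k}) : graph k := odflt [ffun=> false] [pick G in c].

Lemma rep_spec k (c : {set graph k}) :
  c \in iso_classes k -> simple_graph (rep c) /\ c = iso_class (rep c).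
Proof.
case/imsetP => G0; rewrite inE => sG0 ->; rewrite /rep.
case: pickP => [H|]; last by move/(_ G0); rewrite inE sG0 iso_refl.
by rewrite inE => /andP [sH iH]; split => //; apply: iso_class_eq.
Qed.

Definition Fp k (p : {set graph k} * bool) : {set {set graph (k + 6)}} :=
  [set iso_class (gsum (rep p.1) (gX p.2)); iso_class (gsum (rep p.1) (gY p.2))].

Lemma mem2_iso n (G A B : graph n) :
  simple_graph G -> iso_class G \in [set iso_class A; iso_class B] ->
  graph_iso A G \/ graph_iso B G.
Proof.
move=> sG; rewrite in_set2 => /orP [] /eqP e.
  by left; apply: iso_class_iso.
by right; apply: iso_class_iso.
Qed.

Lemma corollary_k k : (2 * num_graphs k <= #|lap_cospec_zeta_pairs (k + 6)|)%N.
Proof.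
rewrite /num_graphs.
set C := iso_classes k.
have sub : [set Fp x | x in setX C [set: bool]] \subset lap_cospec_zeta_pairs (k + 6).
  apply/subsetP => S /imsetP [[c b]]; rewrite inE /= => /andP [hc _] ->.
  have [sH _] := rep_spec hc.
  rewrite inE; apply/existsP; exists (gsum (rep c) (gX b)).
  apply/existsP; exists (gsum (rep c) (gY b)).
  by rewrite !simple_gsum ?gX_simple ?gY_simple //= eqxx pair_good.
have inj : {in setX C [set: bool] &, injective (@Fp k)}.
  move=> [c b] [c' b']; rewrite !inE /= => /andP [hc _] /andP [hc' _] e.
  have [sH eH] := rep_spec hc; have [sH' eH'] := rep_spec hc'.
  have m1 : iso_class (gsum (rep c) (gX b)) \in Fp (c', b').
    by rewrite -e /Fp in_set2 eqxx.
  have m2 : iso_class (gsum (rep c) (gY b)) \in Fp (c, b) by rewrite /Fp in_set2 eqxx orbT.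
  rewrite e in m2.
  have d1 := mem2_iso (simple_gsum sH (gX_simple b)) m1.
  have d2 := mem2_iso (simple_gsum sH (gY_simple b)) m2.
  have fin : graph_iso (gsum (rep c') (gX b')) (gsum (rep c) (gX b)) -> b = b' ->
      (c, b) = (c', b').
    move=> i eb; subst b'; congr (_, _); rewrite eH eH'.
    by apply: iso_class_eq; apply: iso_sym; apply: (@cancel_iso _ 6 _ _ (gX b)).
  rewrite /= in d1 d2.
  case: d1 => i1; case: d2 => i2; have n1 := e22_iso i1; have n2 := e22_iso i2;
    rewrite !e22_sum ?e22X ?e22Y in n1 n2.
  - apply: (fin i1); clear fin.
    by case: b b' n1 n2 {i1 i2 e m1 m2} => -[] /=; lia.
  - apply: (fin i1); clear fin.
    by case: b b' n1 n2 {i1 i2 e m1 m2} => -[] /=; lia.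
  - exfalso; clear fin.
    by case: b b' n1 n2 {i1 i2 e m1 m2} => -[] /=; lia.
  - exfalso; clear fin.
    by case: b b' n1 n2 {i1 i2 e m1 m2} => -[] /=; lia.
apply: (leq_trans _ (subset_leq_card sub)).
by rewrite (card_in_imset inj) cardsX cardsT card_bool mulnC.
Qed.

Theorem corollary4p8 (n : nat) :
  (6 <= n)%N -> (2 * num_graphs (n - 6) <= #|lap_cospec_zeta_pairs n|)%N.
Proof.
move=> h6; have [k ->] : exists k, n = (k + 6)%N by exists (n - 6)%N; rewrite subnK.
by rewrite addnK; exact: corollary_k.
Qed.
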